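(* Let $F$ be a field of characteristic $2$ with subfield of squares $F^2$. The map $F\times F\to W_{ssq}(F)$, $(\alpha,\alpha')\mapsto$ Witt class of $\langle\alpha\,|\,\alpha'\rangle$, induces a well-defined group homomorphism $$\Phi\colon F\otimes_{F^2}F\to W_{ssq}(F),\qquad \alpha\otimes\alpha'\mapsto\langle\alpha\,|\,\alpha'\rangle,$$ and $\Phi$ is an isomorphism of groups.
   Context: Let $F$ be a field of characteristic $2$. A separated symplectic quadratic space over $F$ is a triple $(V,q,q')$ where $V$ is a finite-dimensional $F$-vector space, $q$ is a totally singular quadratic form on $V$ and $q'$ is a totally singular quadratic form on the dual space $V^*$ (a quadratic form $Q$ is totally singular if $Q(x+y)=Q(x)+Q(y)$ for all $x,y$). Two such spaces $(V_1,q_1,q_1')$, $(V_2,q_2,q_2')$ are isometric if there is a linear isomorphism $L\colon V_1\to V_2$ with $q_2\circ L=q_1$ and $q_1'\circ L^*=q_2'$ ($L^*$ the dual map). Orthogonal sum: $(V_1\oplus V_2,q_1\perp q_2,q_1'\perp q_2')$ using $(V_1\oplus V_2)^*=V_1^*\oplus V_2^*$. For a subspace $U\subset V$, $U^{o}=\{\varphi\in V^*:\varphi(U)=0\}$. The space is metabolic if there exists a subspace $U\subset V$ (of any dimension) with $q(U)=\{0\}$ and $q'(U^o)=\{0\}$. $W_{ssq}(F)$ is the Witt group of separated symplectic quadratic spaces: isometry classes modulo $\varphi\sim\psi$ iff $\varphi\perp\mu\simeq\psi\perp\mu'$ for metabolic $\mu,\mu'$, with operation induced by orthogonal sum. For $\alpha,\alpha'\in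 F$, $\langle\alpha\,|\,\alpha'\rangle$ is the one-dimensional space $(F,q,q')$ with $q(1)=\alpha$ and $q'(1^* )=\alpha'$, where $1^*$ is the dual basis vector of $1$. *)

(* Defs.v *)
From HB Require Import structures.
From mathcomp Require Import all_boot all_order all_algebra.
Set Implicit Arguments. Unset Strict Implicit. Unset Printing Implicit Defensive.
Import Order.TTheory GRing.Theory Num.Theory.
Local Open Scope ring_scope.

Section SSQ.
Variable F : fieldType.

Definition polar {n} (q : 'rV[F]_n -> F) (x y : 'rV[F]_n) : F :=
  q (x + y) - q x - q y.

Definition qform {n} (q : 'rV[F]_n -> F) : Prop :=
  (forall c x, q (c *: x) = c ^+ 2 * q x) /\
  (forall x y z, polar q (x + y) z = polar q x z + polar q y z) /\
  (forall x y z, polar q x (y + z) = polar q x y + polar q x z) /\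
  (forall c x y, polar q (c *: x) y = c * polar q x y) /\
  (forall c x y, polar q x (c *: y) = c * polar q x y).

Definition ts_qform {n} (q : 'rV[F]_n -> F) : Prop :=
  qform q /\ (forall x y, q (x + y) = q x + q y).

(* ---------- separated symplectic quadratic spaces ----------
   V = F^n (row vectors); the dual V^* is identified with F^n through the
   standard pairing  phi(v) = v *m phi^T.  ssq_q is q on V, ssq_qd is q' on V^*. *)
Record ssq := SSQ {
  ssq_dim : nat;
  ssq_q : 'rV[F]_ssq_dim -> F;
  ssq_qd : 'rV[F]_ssq_dim -> F }.
Arguments ssq_q s _ : clear implicits.
Arguments ssq_qd s _ : clear implicits.

Definition valid (V : ssq) : Prop := ts_qform (ssq_q V) /\ ts_qform (ssq_qd V).

(* isometry: L(x) = x *m M, L bijective; dual map L^*(y) = y *m M^T *)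
Definition isometric (V W : ssq) : Prop :=
  exists M : 'M[F]_(ssq_dim V, ssq_dim W),
    [/\ row_free M, row_full M,
        (forall x, ssq_q W (x *m M) = ssq_q V x) &
        (forall y, ssq_qd V (y *m M^T) = ssq_qd W y)].

Definition osum (V W : ssq) : ssq :=
  @SSQ (ssq_dim V + ssq_dim W)
    (fun x => ssq_q V (lsubmx x) + ssq_q W (rsubmx x))
    (fun y => ssq_qd V (lsubmx y) + ssq_qd W (rsubmx y)).

(* metabolic: some subspace U (row space of a matrix) with q(U) = 0 and
   q'(U^o) = 0, U^o = {phi | phi(U) = 0} *)
Definition metabolic (V : ssq) : Prop :=
  exists U : 'M[F]_(ssq_dim V),
    (forall u : 'rV[F]_(ssq_dim V), (u <= U)%MS -> ssq_q V u = 0) /\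
    (forall phi : 'rV[F]_(ssq_dim V),
        (forall u : 'rV[F]_(ssq_dim V), (u <= U)%MS -> u *m phi^T = 0) ->
        ssq_qd V phi = 0).

Definition witt_equiv (V W : ssq) : Prop :=
  exists mu mu' : ssq,
    [/\ valid mu, valid mu', metabolic mu, metabolic mu' &
        isometric (osum V mu) (osum W mu')].

Definition one_dim (a a' : F) : ssq :=
  @SSQ 1 (fun x => a * (x 0 0) ^+ 2) (fun y => a' * (y 0 0) ^+ 2).

Definition zero_ssq : ssq := @SSQ 0 (fun _ => 0) (fun _ => 0).

(* ---------- the tensor product F (x)_{F^2} F ----------
   Free abelian group on F x F: formal Z-combinations, compared by coefficients. *)
Definition fsum := seq (int * (F * F)).
Definition fcoef (s : fsum) (p : F * F) : int := \sum_(x <- s | x.2 == p) x.1.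

Inductive tensor_relator : fsum -> Prop :=
| rel_addl a b c :
    tensor_relator [:: (1%:Z, (a + b, c)); (-1, (a, c)); (-1, (b, c))]
| rel_addr a b c :
    tensor_relator [:: (1%:Z, (a, b + c)); (-1, (a, b)); (-1, (a, c))]
| rel_sq x a b :
    tensor_relator [:: (1%:Z, (x ^+ 2 * a, b)); (-1, (a, x ^+ 2 * b))].

Definition tensor_zero (s : fsum) : Prop :=
  exists rs : seq (int * fsum),
    (forall r, r \in rs -> tensor_relator r.2) /\
    forall p, fcoef s p = \sum_(r <- rs) r.1 * fcoef r.2 p.

(* an element of F (x) F represented as a sum of pure tensors
   sum_i a_i (x) a'_i ; two such sums are equal in F (x)_{F^2} F *)
Definition tens_eq (s t : seq (F * F)) : Prop :=
  tensor_zero ([seq (1%:Z, x) | x <- s] ++ [seq (-1, x) | x <- t]).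

Definition Phi (s : seq (F * F)) : ssq :=
  foldr (fun x acc => osum (one_dim x.1 x.2) acc) zero_ssq s.

End SSQ.

(* Main.v *)
Require Import Defs.
From HB Require Import structures.
From mathcomp Require Import all_boot all_order all_algebra all_fingroup.
From mathcomp Require Import zify ring.
Import GRing.Theory.
Local Open Scope ring_scope.
Set Implicit Arguments. Unset Strict Implicit.

Notation qq V := (@ssq_q _ V).
Notation qd V := (@ssq_qd _ V).

Definition TZ (F : fieldType) (f : F * F -> int) :=
  exists rs : seq (int * fsum F),
    (forall r, r \in rs -> tensor_relator r.2) /\
    forall p, f p = \sum_(r <- rs) r.1 * fcoef r.2 p.

Lemma TZ0 (F : fieldType) : TZ (fun _ : F * F => 0).
Proof. by exists [::]; split => // p; rewrite big_nil. Qed.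

Lemma TZext (F : fieldType) (f g : F * F -> int) :
  (forall p, f p = g p) -> TZ f -> TZ g.
Proof. by move=> e [rs [H1 H2]]; exists rs; split => // p; rewrite -e. Qed.

Lemma TZD (F : fieldType) (f g : F * F -> int) :
  TZ f -> TZ g -> TZ (fun p => f p + g p).
Proof.
move=> [rs [H1 H2]] [rs' [H1' H2']]; exists (rs ++ rs'); split.
  by move=> r; rewrite mem_cat => /orP [/H1|/H1'].
by move=> p; rewrite big_cat /= H2 H2'.
Qed.

Lemma TZN (F : fieldType) (f : F * F -> int) : TZ f -> TZ (fun p => - f p).
Proof.
move=> [rs [H1 H2]]; exists [seq (- r.1, r.2) | r <- rs]; split.
  by move=> r /mapP [r' /H1 ? ->].
by move=> p; rewrite big_map H2 -sumrN; apply: eq_bigr => r _; rewrite mulNr.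
Qed.

Lemma TZrel (F : fieldType) (r : fsum F) : tensor_relator r -> TZ (fcoef r).
Proof.
move=> H; exists [:: (1, r)]; split; first by move=> r'; rewrite inE => /eqP ->.
by move=> p; rewrite big_cons big_nil /= mul1r addr0.
Qed.

Lemma TZsum (F : fieldType) (I : Type) (r : seq I) (h : I -> F * F -> int) :
  (forall i, TZ (h i)) -> TZ (fun p => \sum_(i <- r) h i p).
Proof.
move=> H; elim: r => [|i r IH].
  by apply: TZext (TZ0 F) => p; rewrite big_nil.
by apply: TZext (TZD (H i) IH) => p; rewrite big_cons.
Qed.

Definition teq (F : fieldType) (f g : F * F -> int) := TZ (fun p => f p - g p).

Lemma teq_refl (F : fieldType) (f : F * F -> int) : teq f f.
Proof. by apply: TZext (TZ0 F) => p; rewrite subrr. Qed.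

Lemma teq_ext (F : fieldType) (f g : F * F -> int) : (forall p, f p = g p) -> teq f g.
Proof. by move=> e; apply: TZext (TZ0 F) => p; rewrite e subrr. Qed.

Lemma teq_sym (F : fieldType) (f g : F * F -> int) : teq f g -> teq g f.
Proof. by move=> H; apply: TZext (TZN H) => p; rewrite opprB. Qed.

Lemma teq_trans (F : fieldType) (f g h : F * F -> int) : teq f g -> teq g h -> teq f h.
Proof. by move=> H1 H2; apply: TZext (TZD H1 H2) => p; rewrite addrA subrK. Qed.

Lemma teq_add (F : fieldType) (f1 f2 g1 g2 : F * F -> int) :
  teq f1 g1 -> teq f2 g2 -> teq (fun p => f1 p + f2 p) (fun p => g1 p + g2 p).
Proof.
move=> H1 H2; apply: TZext (TZD H1 H2) => p.
by rewrite opprD addrACA.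
Qed.

Lemma teq_sum (F : fieldType) (I : Type) (r : seq I) (f g : I -> F * F -> int) :
  (forall i, teq (f i) (g i)) ->
  teq (fun p => \sum_(i <- r) f i p) (fun p => \sum_(i <- r) g i p).
Proof.
move=> H; apply: TZext (TZsum r H) => p.
by rewrite sumrB.
Qed.

Definition dt (F : fieldType) (a b : F) : F * F -> int := fun p => ((a, b) == p)%:Z.

Lemma dt_addl (F : fieldType) (a b c : F) :
  teq (dt (a + b) c) (fun p => dt a c p + dt b c p).
Proof.
apply: TZext (TZrel (rel_addl a b c)) => p.
rewrite /fcoef !big_cons big_nil /dt /=.
by case: ((a+b,c) == p); case: ((a,c) == p); case: ((b,c) == p) => /=; lia.
Qed.

Lemma dt_addr (F : fieldType) (a b c : F) :
  teq (dt a (b + c)) (fun p => dt a b p + dt a c p).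
Proof.
apply: TZext (TZrel (rel_addr a b c)) => p.
rewrite /fcoef !big_cons big_nil /dt /=.
by case: ((a,b+c) == p); case: ((a,b) == p); case: ((a,c) == p) => /=; lia.
Qed.

Lemma dt_sq (F : fieldType) (x a b : F) :
  teq (dt (x ^+ 2 * a) b) (dt a (x ^+ 2 * b)).
Proof.
apply: TZext (TZrel (rel_sq x a b)) => p.
rewrite /fcoef !big_cons big_nil /dt /=.
by case: ((x ^+ 2 * a,b) == p); case: ((a,x ^+ 2 * b) == p) => /=; lia.
Qed.

Lemma dt0l (F : fieldType) (b : F) : teq (dt 0 b) (fun _ => 0).
Proof.
have H := dt_addl (0 : F) 0 b; rewrite addr0 in H.
apply: TZext (TZN H) => p; lia.
Qed.

Lemma dt0r (F : fieldType) (a : F) : teq (dt a 0) (fun _ => 0).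
Proof.
have H := dt_addr a (0 : F) 0; rewrite addr0 in H.
apply: TZext (TZN H) => p; lia.
Qed.

Lemma dt_suml (F : fieldType) (I : Type) (r : seq I) (f : I -> F) (c : F) :
  teq (dt (\sum_(i <- r) f i) c) (fun p => \sum_(i <- r) dt (f i) c p).
Proof.
elim: r => [|i r IH].
  by rewrite big_nil; apply: teq_trans (dt0l c) _; apply: teq_ext => p; rewrite big_nil.
rewrite big_cons; apply: teq_trans (dt_addl _ _ _) _.
apply: teq_trans (teq_add (teq_refl _) IH) _.
by apply: teq_ext => p; rewrite big_cons.
Qed.

Lemma dt_sumr (F : fieldType) (I : Type) (r : seq I) (f : I -> F) (a : F) :
  teq (dt a (\sum_(i <- r) f i)) (fun p => \sum_(i <- r) dt a (f i) p).
Proof.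
elim: r => [|i r IH].
  by rewrite big_nil; apply: teq_trans (dt0r a) _; apply: teq_ext => p; rewrite big_nil.
rewrite big_cons; apply: teq_trans (dt_addr _ _ _) _.
apply: teq_trans (teq_add (teq_refl _) IH) _.
by apply: teq_ext => p; rewrite big_cons.
Qed.


Definition ev (F : fieldType) (n k : nat) : 'rV[F]_n := \row_j ((j == k :> nat)%:R).

Definition dl (F : fieldType) (V : ssq F) : seq (F * F) :=
  mkseq (fun k => (qq V (ev F _ k), qd V (ev F _ k))) (ssq_dim V).

Lemma ts_scale (F : fieldType) n (q : 'rV[F]_n -> F) c x :
  ts_qform q -> q (c *: x) = c ^+ 2 * q x.
Proof. by case=> [[H _] _]. Qed.

Lemma ts_add (F : fieldType) n (q : 'rV[F]_n -> F) x y :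
  ts_qform q -> q (x + y) = q x + q y.
Proof. by case=> [_ H]. Qed.

Lemma ts_0 (F : fieldType) n (q : 'rV[F]_n -> F) :
  ts_qform q -> q 0 = 0.
Proof. by move=> H; rewrite -(scale0r 0) (ts_scale _ _ H) expr0n mul0r. Qed.

Lemma ts_sum (F : fieldType) n (q : 'rV[F]_n -> F) I (r : seq I) (f : I -> 'rV_n) :
  ts_qform q -> q (\sum_(i <- r) f i) = \sum_(i <- r) q (f i).
Proof.
move=> H; elim: r => [|i r IH]; first by rewrite !big_nil ts_0.
by rewrite !big_cons ts_add // IH.
Qed.

Lemma ev_delta (F : fieldType) n (i : 'I_n) : ev F n i = delta_mx 0 i.
Proof. by apply/rowP => j; rewrite !mxE eqxx /=. Qed.

Lemma ts_expand (F : fieldType) n (q : 'rV[F]_n -> F) x :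
  ts_qform q -> q x = \sum_(i < n) (x 0 i) ^+ 2 * q (ev F n i).
Proof.
move=> H; rewrite {1}(row_sum_delta x) ts_sum //.
by apply: eq_bigr => i _; rewrite ts_scale // ev_delta.
Qed.

Lemma ts_of (F : fieldType) n (q : 'rV[F]_n -> F) :
  (forall c x, q (c *: x) = c ^+ 2 * q x) -> (forall x y, q (x + y) = q x + q y) ->
  ts_qform q.
Proof.
move=> H1 H2; have P0 : forall x y, polar q x y = 0.
  by move=> x y; rewrite /polar H2 [q x + _]addrC addrK subrr.
split=> //; split=> //; split; first by move=> *; rewrite !P0 addr0.
split; first by move=> *; rewrite !P0 addr0.
by split=> *; rewrite !P0 mulr0.
Qed.

Lemma valid_osum (F : fieldType) (V W : ssq F) : valid V -> valid W -> valid (osum V W).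
Proof.
move=> [hV hV'] [hW hW']; split; apply: ts_of => /=.
- by move=> c x; rewrite !linearZ /= !ts_scale // mulrDr.
- by move=> x y; rewrite !linearD /= !ts_add // addrACA.
- by move=> c x; rewrite !linearZ /= !ts_scale // mulrDr.
- by move=> x y; rewrite !linearD /= !ts_add // addrACA.
Qed.

Lemma valid_zero (F : fieldType) : valid (zero_ssq F).
Proof. by split; apply: ts_of => *; rewrite ?mulr0 ?addr0. Qed.

Lemma sqrD2 (F : fieldType) (hF : (2%N) \in [pchar F]) (x y : F) :
  (x + y) ^+ 2 = x ^+ 2 + y ^+ 2.
Proof. by rewrite sqrrD -mulr_natr (pcharf0 hF) mulr0 addr0. Qed.

Lemma valid_one (F : fieldType) (hF : (2%N) \in [pchar F]) (a b : F) : valid (one_dim a b).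
Proof.
split; apply: ts_of => /=.
- by move=> c x; rewrite mxE exprMn mulrCA.
- by move=> x y; rewrite mxE sqrD2 // mulrDr.
- by move=> c x; rewrite mxE exprMn mulrCA.
- by move=> x y; rewrite mxE sqrD2 // mulrDr.
Qed.

Lemma valid_Phi (F : fieldType) (hF : (2%N) \in [pchar F]) (s : seq (F * F)) : valid (Phi s).
Proof.
elim: s => [|x s IH]; first exact: valid_zero.
exact: valid_osum (valid_one hF _ _) IH.
Qed.

Lemma mkseqD (T : Type) (f : nat -> T) n m :
  mkseq f (n + m) = mkseq f n ++ mkseq (fun k => f (n + k)%N) m.
Proof. by rewrite /mkseq iotaD map_cat; congr (_ ++ _); rewrite add0n -{1}(addn0 n) iotaDl -map_comp. Qed.

Lemma lsub_ev (F : fieldType) n m k : lsubmx (ev F (n + m) k) = ev F n k.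
Proof. by apply/rowP => j; rewrite !mxE. Qed.

Lemma rsub_ev_lo (F : fieldType) n m k : (k < n)%N -> rsubmx (ev F (n + m) k) = 0.
Proof.
move=> lt; apply/rowP => j; rewrite !mxE /=.
by case: eqP => // E; move: lt; rewrite -E; lia.
Qed.

Lemma rsub_ev_hi (F : fieldType) n m k : rsubmx (ev F (n + m) (n + k)) = ev F m k.
Proof. by apply/rowP => j; rewrite !mxE /= eqn_add2l. Qed.

Lemma ev_out (F : fieldType) n k : (n <= k)%N -> ev F n k = 0.
Proof.
move=> le; apply/rowP => j; rewrite !mxE.
by case: eqP => // E; have := ltn_ord j; rewrite E; lia.
Qed.

Lemma dl_osum (F : fieldType) (V W : ssq F) : valid V -> valid W ->
  dl (osum V W) = dl V ++ dl W.
Proof.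
move=> [hV hV'] [hW hW']; rewrite /dl /= mkseqD; congr (_ ++ _).
  rewrite /mkseq; apply/eq_in_map => k; rewrite mem_iota add0n => /andP [_ lt].
  by rewrite !lsub_ev !rsub_ev_lo // !ts_0 // !addr0.
apply: eq_map => k; rewrite !lsub_ev !rsub_ev_hi (@ev_out F (ssq_dim V)) ?leq_addr //.
by rewrite !ts_0 // !add0r.
Qed.

Lemma dl_Phi (F : fieldType) (hF : (2%N) \in [pchar F]) (s : seq (F * F)) : dl (Phi s) = s.
Proof.
elim: s => [|[a b] s IH] //=.
rewrite (dl_osum (valid_one hF _ _) (valid_Phi hF _)) IH.
by rewrite /dl /= /mkseq /= !mxE /= expr1n !mulr1.
Qed.

Definition Tl (F : fieldType) (s : seq (F * F)) : F * F -> int :=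
  fun p => (count_mem p s)%:Z.

Lemma Tl_cat (F : fieldType) (s t : seq (F * F)) p : Tl (s ++ t) p = Tl s p + Tl t p.
Proof. by rewrite /Tl count_cat PoszD. Qed.

Lemma Tl_dl (F : fieldType) (V : ssq F) p :
  Tl (dl V) p = \sum_(i < ssq_dim V) dt (qq V (ev F _ i)) (qd V (ev F _ i)) p.
Proof.
rewrite /Tl /dl /mkseq count_map -(big_mkord xpredT (fun i : nat => dt (qq V (ev F _ i)) (qd V (ev F _ i)) p)) /index_iota subn0.
elim: (iota 0 _) => [|k r IH]; first by rewrite big_nil.
by rewrite big_cons /= PoszD IH.
Qed.


Lemma sqr_sum (F : fieldType) (hF : (2%N) \in [pchar F]) I (r : seq I) (f : I -> F) :
  (\sum_(i <- r) f i) ^+ 2 = \sum_(i <- r) f i ^+ 2.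
Proof.
elim: r => [|i r IH]; first by rewrite !big_nil expr0n.
by rewrite !big_cons sqrD2 // IH.
Qed.

Lemma teq_sum0 (F : fieldType) I (r : seq I) (f : I -> F * F -> int) :
  (forall i, teq (f i) (fun _ => 0)) -> teq (fun p => \sum_(i <- r) f i p) (fun _ => 0).
Proof.
move=> H; apply: teq_trans (teq_sum r H) _.
by apply: teq_ext => p; rewrite big1.
Qed.

Lemma basis_change (F : fieldType) (hF : (2%N) \in [pchar F]) (V : ssq F) m
  (M : 'M[F]_(m, ssq_dim V)) (N : 'M[F]_(ssq_dim V, m)) :
  valid V -> N *m M = 1%:M ->
  teq (Tl (dl V)) (fun p => \sum_(i < m) dt (qq V (row i M)) (qd V (row i N^T)) p).
Proof.
move=> [hq hq'] NM.
set n := ssq_dim V in M N NM *.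
pose a (j : 'I_n) := qq V (ev F n j).
pose b (j : 'I_n) := qd V (ev F n j).
have E1 : forall i, qq V (row i M) = \sum_(j < n) (M i j) ^+ 2 * a j.
  by move=> i; rewrite (ts_expand _ hq); apply: eq_bigr => j _; rewrite mxE.
have E2 : forall i, qd V (row i N^T) = \sum_(k < n) (N k i) ^+ 2 * b k.
  by move=> i; rewrite (ts_expand _ hq'); apply: eq_bigr => j _; rewrite !mxE.
apply: teq_sym.
apply: (@teq_trans _ _ (fun p => \sum_(i < m) \sum_(j < n) \sum_(k < n)
   dt (a j) ((M i j * N k i) ^+ 2 * b k) p)).
  apply: teq_sum => i; rewrite E1 E2.
  apply: teq_trans (dt_suml _ _ _) _; apply: teq_sum => j.
  apply: teq_trans (dt_sumr _ _ _) _; apply: teq_sum => k.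
  by rewrite exprMn -(mulrA (M i j ^+ 2)); apply: dt_sq.
apply: (@teq_trans _ _ (fun p => \sum_(j < n) \sum_(k < n) \sum_(i < m)
   dt (a j) ((M i j * N k i) ^+ 2 * b k) p)).
  apply: teq_ext => p; rewrite exchange_big /=; apply: congr_big => // j _.
  by rewrite exchange_big.
apply: (@teq_trans _ _ (fun p => \sum_(j < n) \sum_(k < n)
   dt (a j) ((k == j)%:R * b k) p)).
  apply: teq_sum => j; apply: teq_sum => k.
  apply: teq_trans (teq_sym (dt_sumr _ _ _)) _; apply: teq_ext => p.
  congr (dt _ _ p); rewrite -mulr_suml -sqr_sum //.
  have := congr1 (fun A : 'M_n => A k j) NM; rewrite !mxE => E.
  rewrite (eq_bigr (fun i => N k i * M i j)) ?E; last by move=> i _; rewrite mulrC.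
  by case: (k == j); rewrite /= ?expr1n ?expr0n.
apply: (@teq_trans _ _ (fun p => \sum_(j < n) dt (a j) (b j) p)); last first.
  by apply: teq_ext => p; rewrite Tl_dl.
apply: teq_sum => j.
apply: (@teq_trans _ _ (fun p => dt (a j) (b j) p + \sum_(k < n | k != j) dt (a j) ((k == j)%:R * b k) p)).
  by apply: teq_ext => p; rewrite (bigD1 j) //= eqxx mul1r.
apply: (@teq_trans _ _ (fun p => dt (a j) (b j) p + 0)); last by apply: teq_ext => p; rewrite addr0.
apply: teq_add; first exact: teq_refl.
apply: (@teq_trans _ _ (fun p => \sum_(k < n) (if k != j then dt (a j) 0 p else 0))).
  apply: teq_ext => p; rewrite big_mkcond /=; apply: congr_big => // k _.
  by case: eqP => //= _; rewrite mul0r.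
apply: teq_sum0 => k; case: (k != j); first exact: dt0r.
exact: teq_refl.
Qed.


Lemma two_sided (F : fieldType) m n (M : 'M[F]_(m, n)) :
  row_free M -> row_full M -> exists B : 'M_(n, m), B *m M = 1%:M /\ M *m B = 1%:M.
Proof.
move=> /row_freeP [C HC] /row_fullP [B HB]; exists B; split => //.
have -> : B = C by rewrite -[B]mulmx1 -HC mulmxA HB mul1mx.
exact: HC.
Qed.

Lemma iso_inv (F : fieldType) (hF : (2%N) \in [pchar F]) (V W : ssq F) :
  valid V -> valid W -> isometric V W -> teq (Tl (dl V)) (Tl (dl W)).
Proof.
move=> hV [hW hW'] [M [fr fu Hq Hq']].
have [B [BM MB]] := two_sided fr fu.
apply: teq_trans (basis_change hF hV MB) _.
apply: teq_ext => p; rewrite Tl_dl; apply: eq_bigr => i _.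
congr (dt _ _ p).
  by rewrite -Hq -row_mul BM row1 ev_delta.
by rewrite -Hq' ev_delta -rowE.
Qed.

Lemma meta_inv (F : fieldType) (hF : (2%N) \in [pchar F]) (V : ssq F) :
  valid V -> metabolic V -> teq (Tl (dl V)) (fun _ => 0).
Proof.
move=> hV [U [HU HUo]].
set n := ssq_dim V in U HU HUo *.
pose P := col_mx (row_base U) (row_base (U^C)%MS).
have fu : row_full P.
  rewrite /row_full /P -addsmxE (adds_eqmx (eq_row_base U) (eq_row_base _)).
  exact: addsmx_compl_full.
have fr : row_free P.
  move: fu; rewrite /row_free /row_full => /eqP ->.
  by rewrite mxrank_compl subnKC ?rank_leq_col.
have [N [NP PN]] := two_sided fr fu.
apply: teq_trans (basis_change hF hV NP) _.
apply: (@teq_trans _ _ (fun p => \sum_(i < \rank U) 0 + \sum_(i < \rank (U^C)%MS) 0)); last first.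
  by apply: teq_ext => p; rewrite !big1.
apply: teq_trans (teq_ext (fun p => big_split_ord _ _ _)) _.
apply: teq_add; apply: teq_sum => i.
  rewrite /P rowKu HU; first exact: dt0l.
  by rewrite -(eq_row_base U) row_sub.
have -> : qd V (row (rshift (\rank U) i) N^T) = 0; last exact: dt0r.
apply: HUo => u; rewrite -(eq_row_base U) => /submxP [D ->].
rewrite tr_row trmxK colE mulmxA -mulmxA.
have -> : D *m row_base U = row_mx D 0 *m P by rewrite /P mul_row_col mul0mx addr0.
by rewrite -mulmxA (mulmxA P) PN mul1mx -colE colKr col0.
Qed.


Lemma perm_iso (F : fieldType) (V W : ssq F) :
  valid V -> valid W -> perm_eq (dl V) (dl W) -> isometric V W.
Proof.
case: V => n q q'; case: W => m r r' [/= hq hq'] [/= hr hr'] pe.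
have nm : n = m by have := perm_size pe; rewrite !size_mkseq.
subst m.
rewrite perm_sym in pe.
have /(perm_iotaP (0,0)) [Is pI E] := pe.
rewrite size_mkseq in pI.
have sI : size Is = n by rewrite (perm_size pI) size_iota.
have lt (j : 'I_n) : (nth 0%N Is j < n)%N.
  have lj : (j < size Is)%N by rewrite sI.
  by have := mem_nth 0%N lj; rewrite (perm_mem pI) mem_iota.
pose sg (j : 'I_n) : 'I_n := Ordinal (lt j).
have sg_inj : injective sg.
  move=> j k /(congr1 val) /= /eqP; rewrite nth_uniq ?sI //; first by move/eqP/val_inj.
  by rewrite (perm_uniq pI) iota_uniq.
pose s := perm sg_inj.
have Ej (j : 'I_n) : (r (ev F n j), r' (ev F n j)) = (q (ev F n (sg j)), q' (ev F n (sg j))).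
  have := congr1 (fun l => nth (0,0) l j) E.
  rewrite /dl /= nth_mkseq // (nth_map 0%N) ?sI // nth_mkseq //.
exists (perm_mx s^-1); split.
- by rewrite row_free_unit unitmx_perm.
- by rewrite row_full_unit unitmx_perm.
  move=> x /=; rewrite -col_permE (ts_expand _ hr) (ts_expand _ hq).
  rewrite [in RHS](reindex_inj sg_inj) /=; apply: eq_bigr => j _.
  by rewrite mxE permE; case: (Ej j) => -> _.
- move=> y /=; rewrite tr_perm_mx invgK.
  have -> : y *m perm_mx s = col_perm s^-1 y by rewrite col_permE invgK.
  rewrite (ts_expand _ hr') (ts_expand _ hq') [in LHS](reindex_inj (@perm_inj _ s)) /=.
  apply: eq_bigr => j _; rewrite mxE permK.
  by case: (Ej j) => _ ->; rewrite permE.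
Qed.


Lemma meta_zero (F : fieldType) : metabolic (zero_ssq F).
Proof. by exists 0; split. Qed.

Lemma meta_osum (F : fieldType) (V W : ssq F) :
  metabolic V -> metabolic W -> metabolic (osum V W).
Proof.
move=> [U1 [H1 H1o]] [U2 [H2 H2o]].
exists (block_mx U1 0 0 U2); split.
  move=> u /submxP [D ->] /=.
  rewrite -[D]hsubmxK mul_row_block !mulmx0 addr0 add0r row_mxKl row_mxKr.
  by rewrite H1 ?H2 ?submxMl // addr0.
move=> phi Hphi /=.
have K : forall (u1 : 'rV_(ssq_dim V)) (u2 : 'rV_(ssq_dim W)),
    (u1 <= U1)%MS -> (u2 <= U2)%MS ->
    u1 *m (lsubmx phi)^T + u2 *m (rsubmx phi)^T = 0.
  move=> u1 u2 /submxP [D1 ->] /submxP [D2 ->].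
  rewrite -mul_row_col -tr_row_mx hsubmxK; apply: Hphi.
  have -> : row_mx (D1 *m U1) (D2 *m U2) = row_mx D1 D2 *m block_mx U1 0 0 U2.
    by rewrite mul_row_block !mulmx0 addr0 add0r.
  exact: submxMl.
rewrite H1o ?H2o ?addr0 // => u Hu.
  by have := K 0 u (sub0mx _ _) Hu; rewrite mul0mx add0r.
by have := K u 0 Hu (sub0mx _ _); rewrite mul0mx addr0.
Qed.

Lemma meta_vec (F : fieldType) (V : ssq F) (v : 'rV_(ssq_dim V)) :
  valid V -> qq V v = 0 ->
  (forall phi : 'rV_(ssq_dim V), v *m phi^T = 0 -> qd V phi = 0) -> metabolic V.
Proof.
move=> [hq _] Hv Hphi; exists (<<v>>%MS : 'M_(ssq_dim V)); split.
  move=> u; rewrite genmxE => /submxP [D ->].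
  by rewrite [D]mx11_scalar mul_scalar_mx ts_scale // Hv mulr0.
move=> phi H; apply: Hphi; apply: H.
by rewrite genmxE.
Qed.

Lemma meta_ker (F : fieldType) (V : ssq F) (v : 'rV_(ssq_dim V)) :
  (forall u : 'rV_(ssq_dim V), u *m v^T = 0 -> qq V u = 0) ->
  (forall phi : 'rV_(ssq_dim V), (forall u : 'rV_(ssq_dim V), u *m v^T = 0 -> u *m phi^T = 0) -> qd V phi = 0) ->
  metabolic V.
Proof.
move=> Hq Hphi; exists (kermx v^T); split.
  by move=> u; rewrite sub_kermx => /eqP; apply: Hq.
move=> phi H; apply: Hphi => u Hu; apply: H.
by rewrite sub_kermx Hu.
Qed.


Lemma Phi_q (F : fieldType) (hF : (2%N) \in [pchar F]) (l : seq (F * F)) x :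
  qq (Phi l) x = \sum_(i < ssq_dim (Phi l)) (x 0 i) ^+ 2 * (nth (0,0) l i).1.
Proof.
have [hq _] := valid_Phi hF l.
rewrite (ts_expand _ hq); apply: eq_bigr => i _.
by have := congr1 (fun s => nth (0,0) s i) (dl_Phi hF l); rewrite /dl nth_mkseq // => <-.
Qed.

Lemma Phi_qd (F : fieldType) (hF : (2%N) \in [pchar F]) (l : seq (F * F)) x :
  qd (Phi l) x = \sum_(i < ssq_dim (Phi l)) (x 0 i) ^+ 2 * (nth (0,0) l i).2.
Proof.
have [_ hq] := valid_Phi hF l.
rewrite (ts_expand _ hq); apply: eq_bigr => i _.
by have := congr1 (fun s => nth (0,0) s i) (dl_Phi hF l); rewrite /dl nth_mkseq // => <-.
Qed.

Definition rv (F : fieldType) (l : seq F) n : 'rV[F]_n := \row_i nth 0 l i.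

Lemma dot_exp (F : fieldType) n (u v : 'rV[F]_n) : (u *m v^T) 0 0 = \sum_(i < n) u 0 i * v 0 i.
Proof. by rewrite mxE; apply: eq_bigr => i _; rewrite mxE. Qed.

Lemma mx11_eq0 (F : fieldType) (A : 'M[F]_1) : A = 0 <-> A 0 0 = 0.
Proof.
split=> [->|H]; first by rewrite mxE.
by rewrite [A]mx11_scalar H; apply/matrixP => i j; rewrite !mxE mul0rn.
Qed.

Lemma two0 (F : fieldType) (hF : (2%N) \in [pchar F]) : (2 : F) = 0.
Proof. exact: pcharf0 hF. Qed.

Lemma sol0 (F : fieldType) (hF : (2%N) \in [pchar F]) (x y : F) : x + y = 0 -> x = y.
Proof. by move/eqP; rewrite addr_eq0 => /eqP ->; rewrite oppr_pchar2. Qed.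

Ltac expand := rewrite ?Phi_q ?Phi_qd //= ?dot_exp !big_ord_recl !big_ord0 /= ?mxE /=.

Lemma block1 (F : fieldType) (hF : (2%N) \in [pchar F]) (a b c : F) :
  metabolic (Phi [:: (a + b, c); (a, c); (b, c)]).
Proof.
have h := two0 hF.
apply: (@meta_vec _ _ (rv [:: 1; 1; 1] _)); first exact: valid_Phi.
  by expand; ring: h.
move=> phi /mx11_eq0; expand.
rewrite !mul1r addr0 => /(sol0 hF) ->.
by ring: h.
Qed.

Lemma block2 (F : fieldType) (hF : (2%N) \in [pchar F]) (a b c : F) :
  metabolic (Phi [:: (a, b + c); (a, b); (a, c)]).
Proof.
have h := two0 hF.
apply: (@meta_ker _ _ (rv [:: 1; 1; 1] _)).
  move=> u /mx11_eq0; expand.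
  rewrite !mulr1 addr0 => /(sol0 hF) ->.
  by ring: h.
move=> phi H.
have H1 := H (rv [:: 1; 1; 0] _); have H2 := H (rv [:: 1; 0; 1] _).
move: H1 H2; rewrite !mx11_eq0; expand.
move=> H1 H2; have {H1} /(sol0 hF) E1 := H1 (ltac:(ring: h)).
have {H2} /(sol0 hF) E2 := H2 (ltac:(ring: h)).
move: E1 E2; rewrite !mul1r !mul0r !addr0 !add0r => E1 E2.
rewrite -E1 -E2.
by ring: h.
Qed.

Lemma block3 (F : fieldType) (hF : (2%N) \in [pchar F]) (x a b : F) :
  metabolic (Phi [:: (x ^+ 2 * a, b); (a, x ^+ 2 * b)]).
Proof.
have h := two0 hF.
apply: (@meta_vec _ _ (rv [:: 1; x] _)); first exact: valid_Phi.
  by expand; ring: h.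
move=> phi /mx11_eq0; expand.
rewrite !mul1r addr0 => /(sol0 hF) ->.
by ring: h.
Qed.

Lemma block4 (F : fieldType) (hF : (2%N) \in [pchar F]) (y : F * F) :
  metabolic (Phi [:: y; y]).
Proof.
have h := two0 hF.
apply: (@meta_vec _ _ (rv [:: 1; 1] _)); first exact: valid_Phi.
  by expand; ring: h.
move=> phi /mx11_eq0; expand.
rewrite !mul1r addr0 => /(sol0 hF) ->.
by ring: h.
Qed.


Definition Mu (F : fieldType) (bs : seq (seq (F * F))) : ssq F :=
  foldr (fun b acc => osum (Phi b) acc) (zero_ssq F) bs.

Lemma valid_Mu (F : fieldType) (hF : (2%N) \in [pchar F]) (bs : seq (seq (F * F))) : valid (Mu bs).
Proof.
elim: bs => [|b bs IH]; first exact: valid_zero.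
exact: valid_osum (valid_Phi hF b) IH.
Qed.

Lemma dl_zero (F : fieldType) : dl (zero_ssq F) = [::].
Proof. by []. Qed.

Lemma dl_Mu (F : fieldType) (hF : (2%N) \in [pchar F]) (bs : seq (seq (F * F))) : dl (Mu bs) = flatten bs.
Proof.
elim: bs => [|b bs IH] //=.
by rewrite (dl_osum (valid_Phi hF b) (valid_Mu hF bs)) IH dl_Phi.
Qed.

Lemma meta_Mu (F : fieldType) (bs : seq (seq (F * F))) :
  (forall b, b \in bs -> metabolic (Phi b)) -> metabolic (Mu bs).
Proof.
elim: bs => [|b bs IH] H; first exact: meta_zero.
apply: meta_osum; first by apply: H; rewrite inE eqxx.
by apply: IH => b' Hb'; apply: H; rewrite inE Hb' orbT.
Qed.

Lemma fcoef_tens (F : fieldType) (s t : seq (F * F)) p :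
  fcoef ([seq (1%:Z, x) | x <- s] ++ [seq (-1, x) | x <- t]) p = Tl s p - Tl t p.
Proof.
rewrite /fcoef big_cat /= !big_map /Tl; congr (_ + _).
  elim: s => [|x s IH]; first by rewrite big_nil.
  by rewrite big_cons /= IH; case: (x == p) => //=; rewrite PoszD.
elim: t => [|x t IH]; first by rewrite big_nil.
by rewrite big_cons /= IH; case: (x == p) => //=; rewrite PoszD opprD.
Qed.

Lemma tens_eq_teq (F : fieldType) (s t : seq (F * F)) :
  tens_eq s t <-> teq (Tl s) (Tl t).
Proof.
split=> H.
  by apply: TZext H => p; rewrite fcoef_tens.
by apply: TZext H => p; rewrite fcoef_tens.
Qed.

Lemma partA (F : fieldType) (hF : (2%N) \in [pchar F]) (s t : seq (F * F)) :
  witt_equiv (Phi s) (Phi t) -> teq (Tl s) (Tl t).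
Proof.
move=> [mu [mu' [vm vm' mm mm' iso]]].
have := iso_inv hF (valid_osum (valid_Phi hF s) vm) (valid_osum (valid_Phi hF t) vm') iso.
rewrite !dl_osum //; try exact: valid_Phi; rewrite !(dl_Phi hF) => H.
have H1 : teq (Tl s) (Tl (s ++ dl mu)).
  apply: (@teq_trans _ _ (fun p => Tl s p + 0)); first by apply: teq_ext => p; rewrite addr0.
  apply: teq_trans (teq_add (teq_refl _) (teq_sym (meta_inv hF vm mm))) _.
  by apply: teq_ext => p; rewrite Tl_cat.
have H2 : teq (Tl (t ++ dl mu')) (Tl t).
  apply: (@teq_trans _ _ (fun p => Tl t p + 0)); last by apply: teq_ext => p; rewrite addr0.
  apply: teq_trans _ (teq_add (teq_refl _) (meta_inv hF vm' mm')).
  by apply: teq_ext => p; rewrite Tl_cat.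
exact: teq_trans H1 (teq_trans H H2).
Qed.

Lemma partC (F : fieldType) (hF : (2%N) \in [pchar F]) (V : ssq F) :
  valid V -> witt_equiv V (Phi (dl V)).
Proof.
move=> hV; exists (zero_ssq F), (zero_ssq F); split; try exact: valid_zero; try exact: meta_zero.
apply: perm_iso; try exact: valid_osum (valid_zero F); first exact: valid_osum (valid_Phi hF _) (valid_zero F).
rewrite !dl_osum //; try exact: valid_zero; try exact: valid_Phi.
by rewrite (dl_Phi hF).
Qed.

Definition dbl (T : Type) (h : seq T) : seq T := flatten [seq [:: x; x] | x <- h].

Lemma count_dbl (T : Type) (a : pred T) (h : seq T) : count a (dbl h) = (2 * count a h)%N.
Proof. by elim: h => [|x h IH] //=; rewrite IH; lia. Qed.

Lemma parity (T : eqType) (w : seq T) :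
  (forall p, ~~ odd (count_mem p w)) -> exists h, perm_eq w (dbl h).
Proof.
move: {2}(size w) (leqnn (size w)) => n; elim: n w => [|n IH] [|x w] //= Hs Hp.
- by exists [::].
- by exists [::].
have xw : x \in w.
  have := Hp x; rewrite eqxx /= -has_pred1 has_count; case: (count _ w) => //.
have pw := perm_to_rem xw.
have [h Hh] : exists h, perm_eq (rem x w) (dbl h).
  apply: IH; first by rewrite size_rem //; move: Hs; case: (size w) => //= k; lia.
  move=> p; have := Hp p; rewrite (seq.permP pw) /=.
  by case: (x == p) => //=; rewrite negbK.
exists (x :: h) => /=.
by rewrite perm_cons (perm_trans pw) // perm_cons.
Qed.

Lemma natr_odd (F : fieldType) (hF : (2%N) \in [pchar F]) (n : nat) :
  (n%:R : F) = (odd n)%:R.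
Proof.
by rewrite -{1}(odd_double_half n) natrD -muln2 natrM (pcharf0 hF) mulr0 addr0.
Qed.

Lemma intr_odd (F : fieldType) (hF : (2%N) \in [pchar F]) (z : int) :
  (z%:~R : F) = (odd `|z|%N)%:R.
Proof.
case: z => n /=.
  by rewrite -pmulrn (natr_odd hF n).
by rewrite NegzE mulrNz oppr_pchar2 // -pmulrn (natr_odd hF n.+1).
Qed.

Lemma fcoef_pm (F : fieldType) (hF : (2%N) \in [pchar F]) (g : fsum F) p :
  (forall x, x \in g -> x.1 = 1 \/ x.1 = -1) ->
  ((fcoef g p)%:~R : F) = (count_mem p (map snd g))%:R.
Proof.
elim: g => [|x g IH] H; first by rewrite /fcoef big_nil.
have IH' := IH (fun y hy => H y (@mem_behead _ (x :: g) _ hy)).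
rewrite /fcoef big_cons /=; case: (x.2 == p) => /=.
  rewrite intrD -/(fcoef g p) IH' natrD.
  by case: (H x (mem_head _ _)) => ->; rewrite (intr_odd hF).
by rewrite add0n -/(fcoef g p) IH'.
Qed.

Lemma relator_pm (F : fieldType) (g : fsum F) :
  tensor_relator g -> forall x, x \in g -> x.1 = 1 \/ x.1 = -1.
Proof.
case=> [a b c|a b c|x a b] y; rewrite !inE;
  repeat (case/orP; first by move/eqP ->; auto); by move/eqP ->; auto.
Qed.

Lemma relator_block (F : fieldType) (hF : (2%N) \in [pchar F]) (g : fsum F) :
  tensor_relator g -> metabolic (Phi (map snd g)).
Proof.
case=> [a b c|a b c|x a b] /=; [exact: block1|exact: block2|exact: block3].
Qed.

Lemma sum_Z (F : fieldType) (hF : (2%N) \in [pchar F]) (rs : seq (int * fsum F)) p :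
  (forall r, r \in rs -> tensor_relator r.2) ->
  \sum_(r <- rs) ((r.1)%:~R * (fcoef r.2 p)%:~R : F) =
  (count_mem p (flatten [seq map snd r.2 | r <- rs & odd `|r.1|%N]))%:R.
Proof.
elim: rs => [|r rs IH] H; first by rewrite big_nil.
rewrite big_cons IH; last by move=> r' h; apply: H; rewrite inE h orbT.
rewrite (fcoef_pm hF); last by apply: relator_pm; apply: H; rewrite inE eqxx.
rewrite (intr_odd hF) /=; case: (odd _) => /=; last by rewrite mul0r add0r.
by rewrite mul1r count_cat natrD.
Qed.

Lemma partB (F : fieldType) (hF : (2%N) \in [pchar F]) (s t : seq (F * F)) :
  teq (Tl s) (Tl t) -> witt_equiv (Phi s) (Phi t).
Proof.
move=> [rs [Hrel Hsum]].
pose Z := flatten [seq map snd r.2 | r <- rs & odd `|r.1|%N].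
have h2 := two0 hF.
have Hp : forall p, ~~ odd (count_mem p (s ++ t ++ Z)).
  move=> p; have := congr1 (fun z : int => (z%:~R : F)) (Hsum p).
  rewrite /= rmorph_sum /=.
  under eq_bigr => r _ do rewrite rmorphM /=.
  rewrite (sum_Z hF) // /Tl intrB -!pmulrn => E.
  rewrite -dvdn2 (dvdn_pcharf hF) !count_cat !natrD -E.
  by apply/eqP; ring: h2.
have [h Hh] := parity Hp.
pose Bs := [seq map snd r.2 | r <- rs & odd `|r.1|%N] ++ [seq [:: x; x] | x <- t].
pose Bs' := [seq [:: x; x] | x <- h].
exists (Mu Bs), (Mu Bs'); split; try exact: valid_Mu.
- apply: meta_Mu => b; rewrite mem_cat => /orP [/mapP [r] | /mapP [x _ ->]].
    by rewrite mem_filter => /andP [_ /Hrel] hr ->; exact: relator_block.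
  exact: block4.
- by apply: meta_Mu => b /mapP [x _ ->]; exact: block4.
apply: perm_iso; try exact: valid_osum (valid_Phi hF _) (valid_Mu hF _).
rewrite !dl_osum; try exact: valid_Phi; try exact: valid_Mu.
rewrite !(dl_Phi hF) !(dl_Mu hF) flatten_cat.
apply/seq.permP => a; have := seq.permP Hh a.
rewrite /Z !count_cat -!/(dbl _) !count_dbl; lia.
Qed.


Unset Implicit Arguments.

Theorem theorem2p2 (F : fieldType) (hF : (2%N) \in [pchar F]) :
  (forall s t : seq (F * F), tens_eq s t <-> witt_equiv (Phi s) (Phi t)) /\
  (forall V : ssq F, valid V -> exists s : seq (F * F), witt_equiv V (Phi s)).
Proof.
split.
  move=> s t; split=> H.
    by apply: (partB hF); apply/tens_eq_teq.
  by apply/tens_eq_teq; apply: (partA hF).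
by move=> V hV; exists (dl V); apply: partC.
Qed.
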